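(* Assume $\Phi$ is convex. Let $\emptyset\neq S\subseteq\mathbb{S}\cap\{x\in\mathbb{R}^n\mid\langle x,u\rangle\ge\alpha\}$ for some $u\in\mathbb{R}^n$ with $\|u\|=1$ and some $\alpha>0$. Then $S$ is hull-addible and $$\operatorname{cl}(\operatorname{sco}S)=\bigcap\{C\subseteq\mathbb{S}\mid C\text{ nonempty, closed and s-convex},\ S\subseteq C\}.$$ Consequently, $\operatorname{cl}(\operatorname{sco}S)$ is the smallest closed s-convex subset of $\mathbb{S}$ containing $S$.
   Context: Standing setting: $n\ge 2$; $\mathbb{R}^n$ carries the usual inner product $\langle\cdot,\cdot\rangle$ and Euclidean norm $\|\cdot\|$; $o$ denotes the zero vector. $\Phi:\mathbb{R}^n\to\mathbb{R}_+:=[0,\infty)$ is a continuous function with $\Phi(tx)=t\Phi(x)$ for all $x\in\mathbb{R}^n$, $t\ge 0$, and $\Phi(x)=0$ iff $x=o$. Set $\mathbb{S}:=\{x\in\mathbb{R}^n\mid \Phi(x)=1\}$ (with the topology induced from $\mathbb{R}^n$), and $\rho:\mathbb{R}^n\to\{o\}\cup\mathbb{S}$, $\rho(x):=x/\Phi(x)$ for $x\neq o$, $\rho(o):=o$. For $x,y\in\mathbb{S}$, $\lambda\in[0,1]$, $\lambda x+_s(1-\lambda)y:=\rho(\lambda x+(1-\lambda)y)$. A nonempty set $S\subseteq\mathbb{S}$ is called s-convex if $\lambda x+_s(1-\lambda)y\in S$ for all $x,y\in S$ and $\lambda\in[0,1]$. A nonempty set $S\subseteq\mathbb{S}$ is hull-addible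 if $o\notin\operatorname{conv}S$; for such $S$, $\operatorname{sco}S:=\rho(\operatorname{conv}S)$. $\operatorname{cl}$ denotes closure in $\mathbb{R}^n$. *)

(* Defs.v *)
(* MathComp-Analysis, R : realType, R^n as row vectors 'rV[R]_n
   (with its canonical product topology, which is the Euclidean topology). *)
From HB Require Import structures.
From mathcomp Require Import all_boot all_order all_algebra.
From mathcomp Require Import all_classical all_reals all_analysis.
Set Implicit Arguments. Unset Strict Implicit. Unset Printing Implicit Defensive.
Import Order.TTheory GRing.Theory Num.Theory.
Import numFieldNormedType.Exports.
Local Open Scope classical_set_scope.
Local Open Scope ring_scope.

Section Defs.
Context {R : realType} {n : nat}.
Implicit Types (Phi : 'rV[R]_n -> R) (S : set 'rV[R]_n).

Definition dotv (x y : 'rV[R]_n) : R := \sum_(i < n) x ord0 i * y ord0 i.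
Definition enorm (x : 'rV[R]_n) : R := Num.sqrt (dotv x x).

Definition gauge_like Phi : Prop :=
  [/\ continuous Phi,
      (forall x, 0 <= Phi x),
      (forall (t : R) x, 0 <= t -> Phi (t *: x) = t * Phi x) &
      (forall x, Phi x = 0 <-> x = 0)].

Definition convex_fun Phi : Prop :=
  forall (x y : 'rV[R]_n) (t : R), 0 <= t <= 1 ->
    Phi (t *: x + (1 - t) *: y) <= t * Phi x + (1 - t) * Phi y.

Definition sphere Phi : set 'rV[R]_n := [set x | Phi x = 1].

Definition rho Phi (x : 'rV[R]_n) : 'rV[R]_n :=
  if x == 0 then 0 else (Phi x)^-1 *: x.

Definition scomb Phi (l : R) (x y : 'rV[R]_n) : 'rV[R]_n :=
  rho Phi (l *: x + (1 - l) *: y).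

Definition s_convex Phi S : Prop :=
  [/\ S !=set0, S `<=` sphere Phi &
      forall x y (l : R), S x -> S y -> 0 <= l <= 1 -> S (scomb Phi l x y)].

Definition conv S : set 'rV[R]_n :=
  [set v | exists (k : nat) (lam : 'I_k -> R) (p : 'I_k -> 'rV[R]_n),
      [/\ forall i, S (p i), forall i, 0 <= lam i,
          \sum_(i < k) lam i = 1 & v = \sum_(i < k) lam i *: p i]].

Definition hull_addible Phi S : Prop :=
  [/\ S !=set0, S `<=` sphere Phi & ~ conv S 0].

Definition sco Phi S : set 'rV[R]_n := rho Phi @` conv S.

End Defs.

(* Main.v *)
From HB Require Import structures.
From mathcomp Require Import all_boot all_order all_algebra.
From mathcomp Require Import all_classical all_reals all_analysis.
From mathcomp Require Import ring lra.
Require Import Defs.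
Import Order.TTheory GRing.Theory Num.Theory.
Import numFieldNormedType.Exports.
Local Open Scope classical_set_scope.
Local Open Scope ring_scope.
Set Implicit Arguments. Unset Strict Implicit.

Lemma closure_map (T U : topologicalType) (f : T -> U) (A : set T) (D : set U) p :
  {for p, continuous f} -> closure A p -> f @` A `<=` D -> closure D (f p).
Proof.
move=> fc cA fAD B nB.
have [a [Aa Ba]] := cA _ (fc B nB).
by exists (f a); split => //; apply: fAD; exists a.
Qed.

Lemma closure_in_closed (T : topologicalType) (A D : set T) p :
  closed D -> A `<=` D -> closure A p -> D p.
Proof.
move=> cD AD cA; rewrite (closure_id D).1 //; exact: (closure_subset AD).
Qed.

Lemma cont_sum (T : topologicalType) (R : realType) (I : Type) (r : seq I)
  (F : I -> T -> R) x :
  (forall i, {for x, continuous (F i)}) ->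
  {for x, continuous (fun z => \sum_(i <- r) F i z)}.
Proof.
move=> Fc; elim: r => [|a r IH].
  have -> : (fun z => \sum_(i <- [::]) F i z) = (fun=> 0).
    by apply/funext => z; rewrite big_nil.
  exact: cvg_cst.
have -> : (fun z => \sum_(i <- a :: r) F i z) =
          (fun z => F a z + \sum_(i <- r) F i z).
  by apply/funext => z; rewrite big_cons.
apply: cvgD; [exact: Fc | exact: IH].
Qed.

Section S.
Context (R : realType) (n : nat).

Lemma dot_cont (u : 'rV[R]_n) x : {for x, continuous (fun z => dotv z u)}.
Proof.
rewrite /dotv; apply: cont_sum => i.
have h := @coord_continuous R 1 n ord0 i x. exact: (cvgMl h).
Qed.

Lemma dot_lin (a b : R) (x y u : 'rV[R]_n) :
  dotv (a *: x + b *: y) u = a * dotv x u + b * dotv y u.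
Proof.
rewrite /dotv !mulr_sumr -big_split; apply: eq_bigr => i _; rewrite !mxE /=; ring.
Qed.

Lemma dot0 (u : 'rV[R]_n) : dotv 0 u = 0.
Proof. by rewrite /dotv big1 // => i _; rewrite mxE mul0r. Qed.

Lemma dot_sum k (lam : 'I_k -> R) (p : 'I_k -> 'rV[R]_n) u :
  dotv (\sum_(i < k) lam i *: p i) u = \sum_(i < k) lam i * dotv (p i) u.
Proof.
rewrite /dotv.
under eq_bigr do rewrite summxE big_distrl /=.
rewrite exchange_big; apply: eq_bigr => i _; rewrite mulr_sumr.
by apply: eq_bigr => j _; rewrite mxE mulrA.
Qed.

Lemma comb_eq (a b : R) (x y : 'rV[R]_n) : a + b != 0 ->
  a *: x + b *: y = (a + b) *: ((a / (a + b)) *: x + (1 - a / (a + b)) *: y).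
Proof. move=> h; apply/rowP => i; rewrite !mxE; field. exact: h. Qed.

Lemma mu_range (a b : R) : 0 <= a -> 0 <= b -> 0 < a + b ->
  0 <= a / (a + b) <= 1.
Proof.
move=> a0 b0 ab; apply/andP; split; first by rewrite divr_ge0 // ltW.
by rewrite ler_pdivrMr // mul1r lerDl.
Qed.

End S.

Section P.
Context (R : realType) (n : nat) (Phi : 'rV[R]_n -> R).
Hypothesis gl : gauge_like Phi.
Hypothesis cv : convex_fun Phi.

Lemma Phi0 : Phi 0 = 0.
Proof. by case: gl => _ _ _ h; apply/h. Qed.

Lemma PhiZ t x : 0 <= t -> Phi (t *: x) = t * Phi x.
Proof. by case: gl => _ _ h _; apply: h. Qed.

Lemma Phi_ge0 x : 0 <= Phi x.
Proof. by case: gl. Qed.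

Lemma Phi_gt0 {x} : x != 0 -> 0 < Phi x.
Proof.
move=> x0; rewrite lt_neqAle Phi_ge0 andbT eq_sym; apply/eqP => h.
by case: gl => _ _ _ H; move/H: h => /eqP; rewrite (negbTE x0).
Qed.

Lemma Phi_cont x : {for x, continuous Phi}.
Proof. by case: gl => h _ _ _; apply: h. Qed.

Lemma PhiD x y : Phi (x + y) <= Phi x + Phi y.
Proof.
have ee : x + y = 2 *: (2^-1 *: x + (1 - 2^-1) *: y).
  apply/rowP => i; rewrite !mxE /=; by field.
rewrite ee PhiZ //.
have h : 0 <= (2^-1 : R) <= 1.
  by apply/andP; split; lra.
have := @cv x y _ h.
have -> : (1 - 2^-1 : R) = 2^-1 by field.
move=> H; apply: le_trans (ler_wpM2l _ H) _ => //. 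
have -> : 2 * (2^-1 * Phi x + 2^-1 * Phi y) = Phi x + Phi y :> R by field.
done.
Qed.

Lemma Phi_sum k (lam : 'I_k -> R) (p : 'I_k -> 'rV[R]_n) :
  (forall i, 0 <= lam i) ->
  Phi (\sum_(i < k) lam i *: p i) <= \sum_(i < k) lam i * Phi (p i).
Proof.
elim: k lam p => [|k IH] lam p H; first by rewrite !big_ord0 Phi0.
rewrite !big_ord_recr /=; apply: le_trans (PhiD _ _) _.
rewrite PhiZ //; apply: lerD => //; exact: IH.
Qed.

Lemma rhoE x : x != 0 -> rho Phi x = (Phi x)^-1 *: x.
Proof. by move=> x0; rewrite /rho (negbTE x0). Qed.

Lemma rhoZ c x : 0 < c -> rho Phi (c *: x) = rho Phi x.
Proof.
move=> c0; case: (eqVneq x 0) => [->|x0]; first by rewrite scaler0.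
have cx0 : c *: x != 0 by rewrite scaler_eq0 negb_or x0 andbT gt_eqF.
rewrite !rhoE // PhiZ ?ltW // scalerA.
have P0 := Phi_gt0 x0.
congr (_ *: _); field; by rewrite !gt_eqF.
Qed.

Lemma Phi_rho x : x != 0 -> Phi (rho Phi x) = 1.
Proof.
move=> x0; rewrite rhoE // PhiZ ?invr_ge0 ?Phi_ge0 // mulVf //.
by rewrite gt_eqF // Phi_gt0.
Qed.

Lemma rho_id x : Phi x = 1 -> rho Phi x = x.
Proof.
move=> h; have x0 : x != 0 by apply/eqP => e; move: h; rewrite e Phi0 => /eqP; rewrite eq_sym oner_eq0.
by rewrite rhoE // h invr1 scale1r.
Qed.

Lemma rho_cont x : x != 0 -> {for x, continuous (rho Phi)}.
Proof.
move=> x0; have Px := Phi_gt0 x0.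
have nP : \forall z \near x, 0 < Phi z := @cvgr_gt _ _ _ (nbhs_filter x) Phi _ (Phi_cont (x:=x)) _ Px.
have ne : {near x, (fun z => (Phi z)^-1 *: z) =1 rho Phi}.
  near=> z.
  have Pz : 0 < Phi z by near: z; exact: nP.
  rewrite /= rhoE //; apply/eqP => ez.
  by move: Pz; rewrite ez Phi0 ltxx.
apply: cvg_trans (near_eq_cvg ne) _.
rewrite rhoE //; apply: cvgZ; last exact: cvg_id.
have hh := (@cvgV _ _ _ (nbhs_filter x) _ _ (lt0r_neq0 Px) (Phi_cont (x:=x))). exact: hh.
Unshelve. all: by end_near.
Qed.

Lemma aff_rho_cont (a : R) (b x : 'rV[R]_n) : a *: x + b != 0 ->
  {for x, continuous (fun z : 'rV[R]_n => rho Phi (a *: z + b))}.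
Proof.
move=> h.
have -> : (fun z => rho Phi (a *: z + b)) = rho Phi \o (fun z : 'rV[R]_n => a *: z + b) by [].
apply: continuous_comp; last exact: rho_cont.
apply: (@continuousD _ _ _ (fun z : 'rV[R]_n => a *: z) (fun=> b)).
  apply: (@continuousZr _ _ _ id). exact: cvg_id.
exact: cst_continuous.
Qed.

End P.

Section Q.
Context (R : realType) (n : nat) (Phi : 'rV[R]_n -> R).
Hypothesis gl : gauge_like Phi.
Hypothesis cv : convex_fun Phi.
Variables (S : set 'rV[R]_n) (u : 'rV[R]_n) (alpha : R).
Hypothesis a0 : 0 < alpha.
Hypothesis hS : S `<=` sphere Phi `&` [set x | alpha <= dotv x u].

Lemma sum_dot {k} {lam : 'I_k -> R} {p : 'I_k -> 'rV[R]_n} :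
  (forall i, S (p i)) -> (forall i, 0 <= lam i) ->
  (\sum_(i < k) lam i) * alpha <= dotv (\sum_(i < k) lam i *: p i) u.
Proof.
move=> Sp l0; rewrite dot_sum mulr_suml; apply: ler_sum => i _.
by apply: ler_wpM2l => //; case: (hS (Sp i)).
Qed.

Lemma dot_neq0 v : alpha <= dotv v u -> v != 0.
Proof. by move=> h; apply/eqP => v0; move: h; rewrite v0 dot0 leNgt a0. Qed.

Lemma conv_dot v : conv S v -> alpha <= dotv v u.
Proof.
case=> k [lam [p [Sp l0 l1 ->]]].
by apply: (le_trans _ (sum_dot Sp l0)); rewrite l1 mul1r.
Qed.

Lemma conv_Phi v : conv S v -> Phi v <= 1.
Proof.
case=> k [lam [p [Sp l0 l1 ->]]].
apply: le_trans; first exact: (Phi_sum gl cv p l0).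
rewrite -l1 le_eqVlt; apply/orP; left; apply/eqP; apply: eq_bigr => i _.
by case: (hS (Sp i)) => -> _; rewrite mulr1.
Qed.

Lemma sco_dot x : sco Phi S x -> alpha <= dotv x u.
Proof.
case=> v cv0 <-.
have dv := conv_dot cv0.
have v0 := dot_neq0 dv.
have P0 := Phi_gt0 gl v0.
have P1 := conv_Phi cv0.
rewrite rhoE //.
have -> : (Phi v)^-1 *: v = (Phi v)^-1 *: v + 0 *: 0 by rewrite scale0r addr0.
rewrite dot_lin mul0r addr0.
have h1 : 1 <= (Phi v)^-1 by rewrite invf_ge1.
apply: (le_trans dv); rewrite -[X in X <= _](mul1r (dotv v u)).
apply: ler_wpM2r => //; exact: le_trans (ltW a0) dv.
Qed.

Lemma sco_sphere x : sco Phi S x -> Phi x = 1.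
Proof. by case=> v cv0 <-; apply: (Phi_rho gl); apply: dot_neq0; exact: conv_dot. Qed.

Lemma conv_convex v w t : conv S v -> conv S w -> 0 <= t <= 1 ->
  conv S (t *: v + (1 - t) *: w).
Proof.
case=> k1 [l1 [p1 [Sp1 l10 l11 ->]]].
case=> k2 [l2 [p2 [Sp2 l20 l21 ->]]] /andP [t0 t1].
pose lam (i : 'I_(k1 + k2)) := match fintype.split i with inl j => t * l1 j | inr j => (1 - t) * l2 j end.
pose p (i : 'I_(k1 + k2)) := match fintype.split i with inl j => p1 j | inr j => p2 j end.
have El j : lam (lshift k2 j) = t * l1 j by rewrite /lam (unsplitK (inl j)).
have Er j : lam (rshift k1 j) = (1 - t) * l2 j by rewrite /lam (unsplitK (inr j)).
have Fl j : p (lshift k2 j) = p1 j by rewrite /p (unsplitK (inl j)).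
have Fr j : p (rshift k1 j) = p2 j by rewrite /p (unsplitK (inr j)).
exists (k1 + k2)%N, lam, p; split.
- by move=> i; rewrite /p; case: (fintype.split i).
- move=> i; rewrite /lam; case: (fintype.split i) => j; apply: mulr_ge0 => //; lra.
- rewrite big_split_ord.
  rewrite (eq_bigr _ (fun j _ => El j)) (eq_bigr _ (fun j _ => Er j)).
  rewrite -!mulr_sumr l11 l21 !mulr1 /=; lra.
- rewrite big_split_ord.
  under [X in _ = X + _]eq_bigr => j _ do rewrite El Fl.
  under [X in _ = _ + X]eq_bigr => j _ do rewrite Er Fr.
  by rewrite !scaler_sumr; congr (_ + _); apply: eq_bigr => i _; rewrite scalerA.
Qed.

Lemma sco_scomb x y l : sco Phi S x -> sco Phi S y -> 0 <= l <= 1 ->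
  sco Phi S (scomb Phi l x y).
Proof.
case=> v cvv <-; case=> w cww <- /andP [l0 l1].
have v0 := dot_neq0 (conv_dot cvv); have w0 := dot_neq0 (conv_dot cww).
have Pv := Phi_gt0 gl v0; have Pw := Phi_gt0 gl w0.
set a := l / Phi v; set b := (1 - l) / Phi w.
have ha : 0 <= a by rewrite divr_ge0 // ltW.
have hb : 0 <= b by rewrite divr_ge0 ?subr_ge0 // ltW.
have hab : 0 < a + b.
  case: (eqVneq l 0) => [l00|ln0].
    have : 0 < b by rewrite /b l00 subr0 div1r invr_gt0.
    lra.
  have : 0 < a by rewrite /a divr_gt0 // lt_neqAle eq_sym ln0 l0.
  lra.
rewrite /scomb (rhoE Phi v0) (rhoE Phi w0) !scalerA -/a -/b comb_eq ?lt0r_neq0 // rhoZ //.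
exists (a / (a + b) *: v + (1 - a / (a + b)) *: w) => //.
exact: conv_convex (mu_range ha hb hab).
Qed.

End Q.

Section Q2.
Context (R : realType) (n : nat) (Phi : 'rV[R]_n -> R).
Hypothesis gl : gauge_like Phi.
Hypothesis cv : convex_fun Phi.
Variables (S : set 'rV[R]_n) (u : 'rV[R]_n) (alpha : R).
Hypothesis a0 : 0 < alpha.
Hypothesis hS : S `<=` sphere Phi `&` [set x | alpha <= dotv x u].

Lemma sconv_sub (C : set 'rV[R]_n) : s_convex Phi C -> S `<=` C ->
  forall k (lam : 'I_k -> R) (p : 'I_k -> 'rV[R]_n),
  (forall i, S (p i)) -> (forall i, 0 <= lam i) -> 0 < \sum_(i < k) lam i ->
  C (rho Phi (\sum_(i < k) lam i *: p i)).
Proof.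
case=> _ _ Cc SC; elim=> [|k IH] lam p Sp l0 lp.
  by move: lp; rewrite big_ord0 ltxx.
move: lp; rewrite !big_ord_recr /=.
set L := \sum_(i < k) lam (widen_ord (leqnSn k) i).
set w := \sum_(i < k) lam (widen_ord (leqnSn k) i) *: p (widen_ord (leqnSn k) i).
move=> lp.
have L0 : 0 <= L by apply: sumr_ge0 => i _.
have Sk := Sp ord_max.
have Pk : Phi (p ord_max) = 1 by case: (hS Sk).
case: (eqVneq L 0) => [L00|Ln0].
  have w0 : w = 0.
    rewrite /w big1 // => i _.
    by rewrite (psumr_eq0P (fun i _ => l0 (widen_ord (leqnSn k) i)) L00) // scale0r.
  rewrite w0 add0r rhoZ //; last by rewrite L00 add0r in lp.
  by rewrite rho_id //; apply: SC.
have Lp : 0 < L by rewrite lt_neqAle eq_sym Ln0 L0.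
have Cw : C (rho Phi w) := IH _ _ (fun i => Sp _) (fun i => l0 _) Lp.
have dw : L * alpha <= dotv w u := sum_dot hS (fun i => Sp _) (fun i => l0 _).
have w0 : w != 0.
  apply/eqP => e; move: dw; rewrite e dot0 => h.
  have : 0 < L * alpha by rewrite mulr_gt0.
  lra.
have Pw := Phi_gt0 gl w0.
have lk := l0 ord_max.
have -> : w = Phi w *: rho Phi w by rewrite (rhoE Phi w0) scalerA mulfV ?scale1r // lt0r_neq0.
rewrite comb_eq ?lt0r_neq0 ?ltr_pwDl // rhoZ ?ltr_pwDl //.
apply: Cc => //.
  exact: SC.
apply: mu_range => //; [exact: ltW | rewrite ltr_pwDl //].
Qed.

End Q2.

Theorem mainTheorem8 (R : realType) (n : nat) (Phi : 'rV[R]_n -> R)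
    (S : set 'rV[R]_n) (u : 'rV[R]_n) (alpha : R) :
  (2 <= n)%N ->
  gauge_like Phi -> convex_fun Phi ->
  enorm u = 1 -> 0 < alpha ->
  S !=set0 ->
  S `<=` sphere Phi `&` [set x | alpha <= dotv x u] ->
  hull_addible Phi S /\
  closure (sco Phi S) =
    \bigcap_(C in [set C : set 'rV[R]_n |
                    closed C /\ s_convex Phi C /\ S `<=` C]) C /\
  (* consequently: the smallest closed s-convex subset of the sphere containing S *)
  [/\ closed (closure (sco Phi S)), s_convex Phi (closure (sco Phi S)),
      S `<=` closure (sco Phi S) &
      forall C : set 'rV[R]_n, closed C -> s_convex Phi C -> S `<=` C ->
        closure (sco Phi S) `<=` C].
Proof.
move=> _ gl cv _ a0 [s Ss] hS.
set K := closure (sco Phi S).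
have conv1 : forall z, S z -> conv S z.
  move=> z Sz; exists 1%N, (fun=> 1), (fun=> z); split => //.
  - by rewrite big_ord1.
  - by rewrite big_ord1 scale1r.
have Ssco : S `<=` sco Phi S.
  move=> z Sz; exists z; first exact: conv1.
  by apply: (rho_id gl); case: (hS _ Sz).
have SK : S `<=` K by move=> z Sz; apply: subset_closure; exact: Ssco.
have Kprop : forall x, K x -> Phi x = 1 /\ alpha <= dotv x u.
  move=> x Kx; split.
    have cD : closed ([set r : R | 1 <= r] `&` [set r | r <= 1]).
      by apply: closedI; [exact: closed_ge | exact: closed_le].
    have h := @closure_map _ _ Phi (sco Phi S) ([set r : R | 1 <= r] `&` [set r | r <= 1]) x
      (Phi_cont gl (x:=x)) Kx.
    have [h1 h2] : ([set r : R | 1 <= r] `&` [set r | r <= 1]) (Phi x).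
      apply: (closure_in_closed cD (@subset_refl _ _)); apply: h.
      by move=> _ [y Sy <-]; rewrite (sco_sphere gl a0 hS Sy) /=; split.
    by apply/eqP; rewrite eq_le h1 h2.
  have h := @closure_map _ _ (fun z => dotv z u) (sco Phi S) [set r : R | alpha <= r] x
      (@dot_cont R n u x) Kx.
  have h2 : closure [set r : R | alpha <= r] (dotv x u).
    by apply: h => _ [y Sy <-]; exact: (sco_dot gl cv a0 hS Sy).
  exact: (closure_in_closed (@closed_ge _ alpha) (@subset_refl _ [set r : R | alpha <= r]) h2).
have nz : forall l x y, 0 <= l <= 1 -> alpha <= dotv x u -> alpha <= dotv y u ->
    l *: x + (1 - l) *: y != 0.
  move=> l x y /andP [l0 l1] hx hy; apply: (dot_neq0 a0 (u:=u)).
  rewrite dot_lin; nra.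
have stepA : forall l x y, 0 <= l <= 1 -> sco Phi S x -> K y -> K (scomb Phi l x y).
  move=> l x y hl Sx Ky.
  have hl' : 0 <= 1 - l <= 1 by case/andP: hl => ? ?; apply/andP; split; lra.
  have nz1 := nz (1 - l) y x hl' (Kprop _ Ky).2 (sco_dot gl cv a0 hS Sx).
  have e1 : 1 - (1 - l) = l by ring.
  rewrite e1 in nz1.
  have h := closure_map (aff_rho_cont gl nz1) Ky (D := sco Phi S).
  rewrite /scomb [X in rho Phi X]addrC.
  apply: h => _ [z Sz <-].
  rewrite addrC; exact: (sco_scomb gl a0 hS Sx Sz hl).
have min : forall C, closed C -> s_convex Phi C -> S `<=` C -> K `<=` C.
  move=> C cC sC SC x; apply: (closure_in_closed cC).
  move=> _ [v [k [lam [p [Sp l0 l1 ->]]]] <-].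
  apply: (sconv_sub gl a0 hS sC SC Sp l0); rewrite l1; exact: ltr01.
have sK : s_convex Phi K.
  split.
  - by exists s; apply: SK.
  - by move=> x Kx; exact: (Kprop _ Kx).1.
  - move=> x y l Kx Ky hl.
    have nz1 := nz l x y hl (Kprop _ Kx).2 (Kprop _ Ky).2.
    have h := closure_map (aff_rho_cont gl nz1) Kx (D := K).
    apply: (closure_in_closed (@closed_closure _ _) (@subset_refl _ _)); apply: h.
    by move=> _ [z Sz <-]; exact: stepA.
split.
  split; [by exists s | by move=> z Sz; case: (hS _ Sz) | ].
  move=> c0; have := conv_dot hS c0; rewrite dot0; lra.
split.
  apply/seteqP; split.
    by move=> x Kx C [cC [sC SC]]; exact: min.
  by move=> x; apply; split; [exact: closed_closure | split].
by split => //; exact: closed_closure.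
Qed.
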